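(* For every $b>1$ and every $\delta>0$ there exists an instance (a finite directed acyclic graph with nonnegative edge costs, start node $s$ and target node $t$) on which the cost $C_s(s)$ incurred by the sophisticated agent with present-bias parameter $b$ is at least $(b-\delta)$ times the cost $C_n(s)$ incurred by the naive agent with present-bias parameter $b$. That is, the ratio of the sophisticated agent's cost to the naive agent's cost can be arbitrarily close to $b$.
   Context: An instance is a finite directed acyclic graph $G=(V,E)$ with nonnegative edge costs $c(u,v)$, start node $s$ and target node $t$, where $t$ is the unique node with no outgoing edges. $C_o(u)$ denotes the minimum cost of a $u$–$t$ path. Sophisticated agent with bias $b$: $C_s(t)=0$, and for $u\ne t$, $S_s(u)\in\arg\min_{v:(u,v)\in E}(b\,c(u,v)+C_s(v))$, $C_s(u)=c(u,S_s(u))+C_s(S_s(u))$. Naive agent with bias $b$: $C_n(t)=0$, and for $u\ne t$, $S_n(u)\in\arg\min_{v:(u,v)\in E}(b\,c(u,v)+C_o(v))$, $C_n(u)=c(u,S_n(u))+C_n(S_n(u))$. Each agent starting at $s$ repeatedly moves to its chosen successor until reaching $t$; its incurred cost is $C_s(s)$, respectively $C_n(s)$. *)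

(* Defs.v *)
From mathcomp Require Import all_boot all_order all_algebra.
From mathcomp Require Import reals.
Set Implicit Arguments. Unset Strict Implicit. Unset Printing Implicit Defensive.
Import Order.TTheory GRing.Theory Num.Theory.
Local Open Scope ring_scope.

Section Defs.
Variables (R : realType) (V : finType).

Definition path_cost (c : V -> V -> R) (u : V) (p : seq V) : R :=
  \sum_(e <- zip (u :: p) p) c e.1 e.2.

Definition is_instance (E : rel V) (c : V -> V -> R) (t : V) : Prop :=
  (forall u v, E u v -> ~~ connect E v u) /\
  (forall u v, E u v -> 0 <= c u v) /\
  (forall u, (forall v, ~~ E u v) <-> u = t).

Definition is_opt_cost (E : rel V) (c : V -> V -> R) (t : V) (Co : V -> R)
  : Prop :=
  forall u,
    (exists p, [/\ path E u p, last u p = t & path_cost c u p = Co u]) /\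
    (forall p, path E u p -> last u p = t -> Co u <= path_cost c u p).

Definition soph_agent (E : rel V) (c : V -> V -> R) (t : V) (b : R)
  (Ss : V -> V) (Cs : V -> R) : Prop :=
  Cs t = 0 /\
  forall u, u != t ->
    [/\ E u (Ss u),
        (forall v, E u v -> b * c u (Ss u) + Cs (Ss u) <= b * c u v + Cs v)
      & Cs u = c u (Ss u) + Cs (Ss u)].

Definition naive_agent (E : rel V) (c : V -> V -> R) (t : V) (b : R)
  (Co : V -> R) (Sn : V -> V) (Cn : V -> R) : Prop :=
  Cn t = 0 /\
  forall u, u != t ->
    [/\ E u (Sn u),
        (forall v, E u v -> b * c u (Sn u) + Co (Sn u) <= b * c u v + Co v)
      & Cn u = c u (Sn u) + Cn (Sn u)].

End Defs.

(* Main.v *)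
Require Import Defs.
From mathcomp Require Import all_boot all_order all_algebra.
From mathcomp Require Import reals.
From mathcomp Require Import ring lra zify.
Import Order.TTheory GRing.Theory Num.Theory.
Local Open Scope ring_scope.

Definition n0 : 'I_5 := @Ordinal 5 0 isT.
Definition n1 : 'I_5 := @Ordinal 5 1 isT.
Definition n2 : 'I_5 := @Ordinal 5 2 isT.
Definition n3 : 'I_5 := @Ordinal 5 3 isT.
Definition n4 : 'I_5 := @Ordinal 5 4 isT.

Lemma ord5_ind (P : 'I_5 -> Prop) :
  P n0 -> P n1 -> P n2 -> P n3 -> P n4 -> forall x, P x.
Proof.
move=> H0 H1 H2 H3 H4 [[|[|[|[|[|k]]]]] Hk].
- by rewrite (_ : Ordinal Hk = n0) //; apply: val_inj.
- by rewrite (_ : Ordinal Hk = n1) //; apply: val_inj.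
- by rewrite (_ : Ordinal Hk = n2) //; apply: val_inj.
- by rewrite (_ : Ordinal Hk = n3) //; apply: val_inj.
- by rewrite (_ : Ordinal Hk = n4) //; apply: val_inj.
- by [].
Qed.

Definition E5 : rel 'I_5 := fun u v =>
  (nat_of_ord u, nat_of_ord v) \in [:: (0,1);(0,3);(1,2);(1,4);(2,4);(3,4)]%N.

Definition c5 (R : realType) (K z m b : R) (u v : 'I_5) : R :=
  match nat_of_ord u, nat_of_ord v with
  | 0%N, 1%N => K
  | 3%N, 4%N => b * K + m
  | 1%N, 4%N => 1
  | 2%N, 4%N => z
  | _, _ => 0
  end.

Lemma E5_lt u v : E5 u v -> (nat_of_ord u < nat_of_ord v)%N.
Proof. by elim/ord5_ind: u; elim/ord5_ind: v. Qed.

Lemma path_E5 x p : path E5 x p -> (nat_of_ord x <= nat_of_ord (last x p))%N.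
Proof.
elim: p x => [|y p IH] x //= /andP[Hxy Hp].
exact: leq_trans (ltnW (E5_lt _ _ Hxy)) (IH _ Hp).
Qed.

Lemma pc1 (R : realType) (c : 'I_5 -> 'I_5 -> R) u v : path_cost c u [:: v] = c u v.
Proof. by rewrite /path_cost /= big_seq1. Qed.

Lemma pc0 (R : realType) (c : 'I_5 -> 'I_5 -> R) u : path_cost c u [::] = 0.
Proof. by rewrite /path_cost /= big_nil. Qed.

Theorem claim1 (R : realType) (b delta : R) :
  1 < b -> 0 < delta ->
  exists (V : finType) (E : rel V) (c : V -> V -> R) (s t : V),
    is_instance E c t /\
    forall (Co : V -> R) (Sn : V -> V) (Cn : V -> R) (Ss : V -> V) (Cs : V -> R),
      is_opt_cost E c t Co ->
      naive_agent E c t b Co Sn Cn ->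
      soph_agent E c t b Ss Cs ->
      0 < Cn s /\ (b - delta) * Cn s <= Cs s.
Proof.
move=> Hb Hd.
set z : R := (1 + b) / 2.
set m : R := (3 + b) / 4.
set K : R := b * z / delta.
have Hz1 : 1 < z by rewrite /z; lra.
have Hzb : z < b by rewrite /z; lra.
have Hm1 : 1 < m by rewrite /m; lra.
have Hmz : m < z by rewrite /z /m; lra.
have HK : delta * K = b * z by rewrite /K; field; rewrite gt_eqF.
have HK0 : 0 < K by rewrite /K divr_gt0 // mulr_gt0 //; lra.
have HbK : 0 < b * K by rewrite mulr_gt0 //; lra.
exists ('I_5 : finType), E5, (@c5 R K z m b), n0, n4.
split.
  split; [|split].
  - move=> u v Huv; apply/negP => /connectP [p Hp Hl].
    have := path_E5 _ _ Hp; rewrite -Hl => H.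
    by have := E5_lt _ _ Huv; rewrite ltnNge H.
  - move=> u v; elim/ord5_ind: u; elim/ord5_ind: v => //= _; rewrite /c5 /=;
      try lra.
  - move=> u; split.
    + elim/ord5_ind: u => // H.
      * by have := H n1.
      * by have := H n2.
      * by have := H n4.
      * by have := H n4.
    + by move=> ->; elim/ord5_ind.
move=> Co Sn Cn Ss Cs HCo [Hn4 Hn] [Hs4 Hs].
have Co4 : Co n4 = 0.
  have [[p [Hp Hl Hc]] _] := HCo n4.
  case: p Hp Hl Hc => [|x p] /=.
    by move=> _ _; rewrite pc0.
  by elim/ord5_ind: x.
have Co1 : Co n1 <= 1.
  by have := (HCo n1).2 [:: n4] isT erefl; rewrite pc1.
have Co2 : Co n2 <= z.
  by have := (HCo n2).2 [:: n4] isT erefl; rewrite pc1.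
have Co3 : Co n3 = b * K + m.
  have [[p [Hp Hl Hc]] _] := HCo n3.
  case: p Hp Hl Hc => [|x p] /=.
    by move=> _ Hl; have := congr1 val Hl.
  elim/ord5_ind: x => //= Hp0; move: Hp0.
  case: p => [|y p] /=.
    by move=> _ _; rewrite pc1.
  by elim/ord5_ind: y.
have Cn2 : Cn n2 = z.
  have [HE _ ->] := Hn n2 isT.
  move: HE; elim/ord5_ind: (Sn n2) => // _.
  by rewrite Hn4 addr0.
have Cn1 : Cn n1 = z.
  have [HE Hle ->] := Hn n1 isT.
  move: HE Hle; elim/ord5_ind: (Sn n1) => // _ Hle.
    by rewrite Cn2 /c5 /= add0r.
  have := Hle n2 isT; rewrite Co4 /c5 /=; lra.
have Cn0 : Cn n0 = K + z.
  have [HE Hle ->] := Hn n0 isT.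
  move: HE Hle; elim/ord5_ind: (Sn n0) => // _ Hle.
    by rewrite Cn1.
  have := Hle n1 isT; rewrite Co3 /c5 /=; lra.
have Cs2 : Cs n2 = z.
  have [HE _ ->] := Hs n2 isT.
  move: HE; elim/ord5_ind: (Ss n2) => // _.
  by rewrite Hs4 addr0.
have Cs3 : Cs n3 = b * K + m.
  have [HE _ ->] := Hs n3 isT.
  move: HE; elim/ord5_ind: (Ss n3) => // _.
  by rewrite Hs4 addr0.
have Cs1 : Cs n1 = z.
  have [HE Hle ->] := Hs n1 isT.
  move: HE Hle; elim/ord5_ind: (Ss n1) => // _ Hle.
    by rewrite Cs2 /c5 /= add0r.
  have := Hle n2 isT; rewrite Cs2 Hs4 /c5 /=; lra.
have Cs0 : Cs n0 = b * K + m.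
  have [HE Hle ->] := Hs n0 isT.
  move: HE Hle; elim/ord5_ind: (Ss n0) => // _ Hle.
    have := Hle n3 isT; rewrite Cs3 Cs1 /c5 /=; lra.
  by rewrite Cs3 /c5 /= add0r.
rewrite Cn0 Cs0; split; first lra.
nra.
Qed.
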